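(* Let $a_1 \ge 1$ be an integer and $f := X^2 - a_1X - 1$. There exist $\bm{x} \in \mathcal{L}(f)$ and an integer $m \ge 1$ such that $\rho(\bm{x}; m) = 4$ and $x_j \not\equiv 0 \pmod m$ for all $j \ge 0$. In particular, $4 \in \mathcal{R}(f)$.
   Context: $\mathcal{L}(f)$ is the set of integer sequences $\bm{x}=(x_n)_{n\ge0}$ with $x_{n+2} = a_1x_{n+1} + x_n$ for all $n\ge0$. For an integer $m\ge1$, $\rho(\bm{x};m) := \#\{x_n \bmod m : n\ge0\}$, and $\mathcal{R}(f) := \{\rho(\bm{x}; m) : \bm{x}\in\mathcal{L}(f),\ m\in\mathbb{Z}^+\}$. *)

(* Defs.v *)
From Stdlib Require Import ZArith List.
Import ListNotations.
Open Scope Z_scope.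

(* L(f) for f = X^2 - a1 X - 1: integer sequences with x_{n+2} = a1 x_{n+1} + x_n *)
Definition in_L (a1 : Z) (x : nat -> Z) : Prop :=
  forall n : nat, x (S (S n)) = a1 * x (S n) + x n.

Definition residue_set (x : nat -> Z) (m : Z) (r : Z) : Prop :=
  exists n : nat, x n mod m = r.

(* rho(x; m) = k : the residue set has exactly k elements,
   i.e. it is enumerated by a duplicate-free list of length k. *)
Definition rho_is (x : nat -> Z) (m : Z) (k : nat) : Prop :=
  exists l : list Z, NoDup l /\ length l = k /\
    (forall r, In r l <-> residue_set x m r).

Definition in_R (a1 : Z) (k : nat) : Prop :=
  exists (x : nat -> Z) (m : Z), in_L a1 x /\ 1 <= m /\ rho_is x m k.

(* Main.v *)
Require Import Defs.
From Stdlib Require Import ZArith List Lia.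
Import ListNotations.
Open Scope Z_scope.

Fixpoint seq2 (a u v : Z) (n : nat) : Z * Z :=
  match n with
  | O => (u, v)
  | S k => let p := seq2 a u v k in (snd p, a * snd p + fst p)
  end.

Definition xs a u v (n : nat) : Z := fst (seq2 a u v n).

Lemma xs_L a u v : in_L a (xs a u v).
Proof. intro n. unfold xs. simpl. reflexivity. Qed.

Lemma per_div a u v m P : (m | xs a u v P - xs a u v 0) ->
  (m | xs a u v (S P) - xs a u v 1) ->
  forall n, (m | xs a u v (n + P) - xs a u v n) /\ (m | xs a u v (S n + P) - xs a u v (S n)).
Proof.
  intros H0 H1 n. induction n as [|n [IH1 IH2]].
  - split; assumption.
  - split; [assumption|].
    replace (S (S n) + P)%nat with (S (S (n + P))) by lia.
    rewrite !xs_L. replace (S n + P)%nat with (S (n+P)) in IH2 by lia.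
    replace (a * xs a u v (S (n + P)) + xs a u v (n + P) -
      (a * xs a u v (S n) + xs a u v n)) with
      (a * (xs a u v (S (n + P)) - xs a u v (S n)) + (xs a u v (n + P) - xs a u v n)) by ring.
    apply Z.divide_add_r; [apply Z.divide_mul_r|]; assumption.
Qed.

Lemma mod_eq_div m x y : 0 < m -> (m | x - y) -> x mod m = y mod m.
Proof.
  intros Hm [k Hk]. replace x with (y + k * m) by lia.
  apply Z.mod_add; lia.
Qed.

Lemma per_mod a u v m P : 0 < m -> (m | xs a u v P - xs a u v 0) ->
  (m | xs a u v (S P) - xs a u v 1) ->
  forall q i, xs a u v (q * P + i) mod m = xs a u v i mod m.
Proof.
  intros Hm H0 H1 q. induction q as [|q IH]; intro i.
  - reflexivity.
  - replace (S q * P + i)%nat with ((q * P + i) + P)%nat by lia.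
    rewrite <- (IH i). apply mod_eq_div; auto.
    apply (proj1 (per_div a u v m P H0 H1 _)).
Qed.

Lemma key (a m u v : Z) (P : nat) (l : list Z) : 0 < m -> (0 < P)%nat ->
  (m | xs a u v P - xs a u v 0) -> (m | xs a u v (S P) - xs a u v 1) ->
  NoDup l ->
  (forall i, (i < P)%nat -> In (xs a u v i mod m) l /\ xs a u v i mod m <> 0) ->
  (forall r, In r l -> exists n, xs a u v n mod m = r) ->
  rho_is (xs a u v) m (length l) /\ forall j, xs a u v j mod m <> 0.
Proof.
  intros Hm HP H0 H1 Hl Hi Hr.
  assert (E : forall n, exists i, (i < P)%nat /\ xs a u v n mod m = xs a u v i mod m).
  { intro n. exists (n mod P)%nat. split. apply Nat.mod_upper_bound; lia.
    rewrite (Nat.div_mod n P) at 1 by lia.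
    rewrite Nat.mul_comm. apply per_mod; auto. }
  split.
  - exists l. split; [auto|split;[auto|]]. intro r. split.
    + intro H. destruct (Hr r H) as [n Hn]. exists n; auto.
    + intros [n Hn]. destruct (E n) as [i [Hi1 Hi2]]. subst r. rewrite Hi2.
      apply (Hi i Hi1).
  - intro j. destruct (E j) as [i [Hi1 Hi2]]. rewrite Hi2. apply (Hi i Hi1).
Qed.

Lemma mod_small' x y k m : x = y + k * m -> 0 <= y < m -> x mod m = y.
Proof. intros -> Hy. rewrite Z.mod_add by lia. apply Z.mod_small; auto. Qed.

Theorem mainTheorem16 (a1 : Z) (ha1 : 1 <= a1) :
  (exists (x : nat -> Z) (m : Z),
      in_L a1 x /\ 1 <= m /\ rho_is x m 4 /\
      (forall j : nat, x j mod m <> 0))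
  /\ in_R a1 4.
Proof.
  assert (A : exists (x : nat -> Z) (m : Z),
      in_L a1 x /\ 1 <= m /\ rho_is x m 4 /\
      (forall j : nat, x j mod m <> 0)).
  { destruct (Z.eq_dec a1 2) as [E|E].
    - subst a1. exists (xs 2 1 1), 5. split; [apply xs_L|split;[lia|]].
      apply (key 2 5 1 1 12 [1;2;3;4]); try lia.
      + vm_compute. exists 3920. reflexivity.
      + vm_compute. exists 9464. reflexivity.
      + repeat constructor; simpl; intuition discriminate.
      + intros i Hi. do 12 (destruct i as [|i]; [vm_compute; split; [tauto|discriminate]|]). lia.
      + intros r Hr. simpl in Hr.
        destruct Hr as [<-|[<-|[<-|[<-|[]]]]].
        * exists 0%nat; reflexivity.
        * exists 3%nat; reflexivity.
        * exists 2%nat; reflexivity.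
        * exists 6%nat; reflexivity.
    - set (m := a1 * a1 + 4).
      assert (X0 : xs a1 a1 (-2) 0 = a1) by reflexivity.
      assert (X1 : xs a1 a1 (-2) 1 = -2) by reflexivity.
      assert (X2 : xs a1 a1 (-2) 2 = a1 * (-2) + a1) by reflexivity.
      assert (X3 : xs a1 a1 (-2) 3 = a1 * (a1 * (-2) + a1) + -2) by reflexivity.
      assert (X4 : xs a1 a1 (-2) 4 = a1 * (a1 * (a1 * (-2) + a1) + -2) + (a1 * (-2) + a1)) by reflexivity.
      assert (X5 : xs a1 a1 (-2) 5 = a1 * (a1 * (a1 * (a1 * (-2) + a1) + -2) + (a1 * (-2) + a1)) + (a1 * (a1 * (-2) + a1) + -2)) by reflexivity.
      assert (M0 : xs a1 a1 (-2) 0 mod m = a1).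
      { rewrite X0. apply (mod_small' _ _ 0); unfold m; nia. }
      assert (M1 : xs a1 a1 (-2) 1 mod m = m - 2).
      { rewrite X1. apply (mod_small' _ _ (-1)); unfold m; nia. }
      assert (M2 : xs a1 a1 (-2) 2 mod m = m - a1).
      { rewrite X2. apply (mod_small' _ _ (-1)); unfold m; nia. }
      assert (M3 : xs a1 a1 (-2) 3 mod m = 2).
      { rewrite X3. apply (mod_small' _ _ (-1)); unfold m; nia. }
      exists (xs a1 a1 (-2)), m. split; [apply xs_L|split;[unfold m; nia|]].
      apply (key a1 m a1 (-2) 4 [a1; m-2; m-a1; 2]); try (unfold m; nia).
      + rewrite X4, X0. exists (- a1). unfold m; ring.
      + rewrite X5, X1. exists (- a1 * a1). unfold m; ring.
      + assert (a1 <> m - 2) by (unfold m; nia).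
        assert (a1 <> m - a1) by (unfold m; nia).
        assert (m - 2 <> m - a1) by lia.
        assert (m - 2 <> 2) by (unfold m; nia).
        assert (m - a1 <> 2) by (unfold m; nia).
        repeat constructor; simpl; intuition congruence.
      + intros i Hi.
        destruct i as [|[|[|[|i]]]]; [rewrite M0|rewrite M1|rewrite M2|rewrite M3|lia];
          (split; [simpl; tauto|unfold m; nia]).
      + intros r Hr. simpl in Hr.
        destruct Hr as [<-|[<-|[<-|[<-|[]]]]].
        * exists 0%nat; auto.
        * exists 1%nat; auto.
        * exists 2%nat; auto.
        * exists 3%nat; auto. }
  split; [exact A|].
  destruct A as [x [m [H1 [H2 [H3 _]]]]]. exists x, m. auto.
Qed.
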